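(* Let $r\geq 3$ and $k\geq 2$, and let $G$ be an $r$-graph that is $(rk-2k+2,k)$-free. Let $u,v$ be distinct vertices of $G$ and let $F_1,\dots,F_s\subseteq G$ be pairwise edge-disjoint subgraphs. Then the sumset $\sum_{i=1}^s C_{F_i}(uv)=\{\sum_{i=1}^s m_i : m_i\in C_{F_i}(uv)\}$ does not contain $k$.
   Context: An $r$-graph is an $r$-uniform hypergraph; subgraphs are identified with their edge sets. An $(s,k)$-configuration is an $r$-graph with exactly $k$ edges and at most $s$ vertices; $(s,k)$-free means containing no such subgraph. For an $r$-graph $F$ and distinct vertices $x,y$, $C_F(xy)$ is the set of integers $i\geq 0$ for which there exist $i$ distinct edges $X_1,\dots,X_i$ of $F$ with $|\{x,y\}\cup\bigcup_{j=1}^iX_j|\le ri-2i+2$ (so $0\in C_F(xy)$ always). *)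

(* Defs.v *)
From mathcomp Require Import all_boot.
Set Implicit Arguments. Unset Strict Implicit. Unset Printing Implicit Defensive.

(* Subgraphs are identified with their edge sets; the vertex set of a
   subgraph H is the union of its edges, [cover H]. *)
Definition is_rgraph (T : finType) (r : nat) (G : {set {set T}}) : Prop :=
  forall e, e \in G -> #|e| = r.

Definition sk_free (T : finType) (s k : nat) (G : {set {set T}}) : Prop :=
  ~ exists H : {set {set T}}, [/\ H \subset G, #|H| = k & #|cover H| <= s].

Definition inC (T : finType) (r : nat) (F : {set {set T}}) (x y : T) (i : nat) : Prop :=
  exists X : {set {set T}},
    [/\ X \subset F, #|X| = i & #|[set x; y] :|: cover X| <= r * i - 2 * i + 2].

(* Main.v *)
Require Import Defs.
From mathcomp Require Import all_boot zify.
Set Implicit Arguments. Unset Strict Implicit.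
Lemma card_bigcup_disj (A : finType) n (X : 'I_n -> {set A}) :
  (forall i j, i != j -> [disjoint X i & X j]) ->
  #|\bigcup_(i < n) X i| = \sum_(i < n) #|X i|.
Proof.
elim: n X => [|n IH] X hd; first by rewrite !big_ord0 cards0.
rewrite !big_ord_recr /= -IH; last first.
  by move=> i j hij; apply: hd; apply: contra hij => /eqP h; apply/eqP; apply: val_inj; exact: (f_equal val h).
have hdis : [disjoint \bigcup_(i < n) X (widen_ord (leqnSn n) i) & X ord_max].
  rewrite disjoint_sym; apply/bigcup_disjoint => i _; apply: hd.
  by rewrite neq_ltn /= (ltn_ord i) orbT.
by rewrite -cardsUI (disjoint_setI0 hdis) cards0 addn0.
Qed.
Lemma union_bound (A : finType) (B : {set A}) n (Y : 'I_n -> {set A}) (c : 'I_n -> nat) :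
  (forall i, #|B :|: Y i| <= #|B| + c i) ->
  #|B :|: \bigcup_(i < n) Y i| <= #|B| + \sum_(i < n) c i.
Proof.
move=> hY.
apply: (big_ind2 (fun S m => #|B :|: S| <= #|B| + m)) => //.
- by rewrite setU0 addn0.
- move=> S1 n1 S2 n2 h1 h2.
  have -> : B :|: (S1 :|: S2) = (B :|: S1) :|: (B :|: S2).
    by rewrite setUACA setUid.
  have hI := cardsUI (B :|: S1) (B :|: S2).
  have hB : #|B| <= #|(B :|: S1) :&: (B :|: S2)|.
    by apply: subset_leq_card; rewrite subsetI !subsetUl.
  lia.
Qed.
Theorem lemma5p1 (T : finType) (r k : nat) (G : {set {set T}})
  (hr : 3 <= r) (hk : 2 <= k) (hG : is_rgraph r G)
  (hfree : sk_free (r * k - 2 * k + 2) k G)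
  (u v : T) (huv : u != v)
  (s : nat) (F : 'I_s -> {set {set T}})
  (hF : forall i, F i \subset G)
  (hdisj : forall i j, i != j -> [disjoint F i & F j]) :
  ~ exists m : 'I_s -> nat,
      (forall i, inC r (F i) u v (m i)) /\ \sum_(i < s) m i = k.
Proof.
move=> [m [hm hsum]].
have [X hX] := fin_all_exists hm.
apply: hfree; exists (\bigcup_(i < s) X i); split.
- apply/bigcupsP => i _; have [h1 _ _] := hX i; exact: subset_trans h1 (hF i).
- rewrite card_bigcup_disj; last first.
    move=> i j hij; have [h1 _ _] := hX i; have [h2 _ _] := hX j.
    exact: disjointWl h1 (disjointWr h2 (hdisj i j hij)).
  rewrite -hsum; apply: eq_bigr => i _; by have [_ -> _] := hX i.
- have hB : #|[set u; v]| = 2 by rewrite cards2 huv.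
  apply: (@leq_trans #|[set u; v] :|: \bigcup_(i < s) cover (X i)|).
    apply: subset_leq_card; apply: subset_trans (subsetUr _ _).
    apply/subsetP => x /bigcupP [e /bigcupP [i _ he] hx].
    apply/bigcupP; exists i => //; apply/bigcupP; by exists e.
  apply: leq_trans (union_bound (c := fun i => r * m i - 2 * m i) _) _.
    move=> i; have [_ _ h] := hX i; rewrite hB; lia.
  rewrite hB; under eq_bigr do rewrite -mulnBl.
  rewrite -big_distrr /= hsum mulnBl; lia.
Qed.
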